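(* For $n\ge 0$ let $S_n$ be the lattice of order ideals of the shifted staircase poset $\{(i,j)\in\mathbb Z^2:1\le i\le j\le n\}$ (componentwise order), ordered by inclusion. Then \[ \sum_{n=0}^\infty \d(S_n)\,x^n = \frac{8x\left(1+\sqrt{1-4x}-x\big(3+\sqrt{1-4x}\big)\right)}{(1-4x)\big(1-4x+\sqrt{1-4x}\big)^3}. \]
   Context: For a finite poset $Q$, $\d(Q)=\sum_{(p,q)\in Q\times Q}\d(p,q)$ is the Wiener index of its Hasse diagram, where $\d(p,q)$ is the graph distance in the Hasse diagram (edges = cover relations) and the sum runs over ordered pairs. $S_0$ has a single element. *)

(* Defs.v *)
From mathcomp Require Import all_boot.
Set Implicit Arguments.
Unset Strict Implicit.
Unset Printing Implicit Defensive.

Definition pt (n : nat) := ('I_n * 'I_n)%type.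

(* Shifted staircase poset {(i,j) : 1 <= i <= j <= n}, shifted to 0-based
   coordinates {(i,j) : 0 <= i <= j < n}. *)
Definition stair (n : nat) : {set pt n} := [set p : pt n | (p.1 <= p.2)%N].

Definition le_pt (n : nat) (q p : pt n) : bool := (q.1 <= p.1)%N && (q.2 <= p.2)%N.

Definition order_ideal (n : nat) (I : {set pt n}) : bool :=
  (I \subset stair n) &&
  [forall p in I, forall q in stair n, le_pt q p ==> (q \in I)].

Definition S (n : nat) : {set {set pt n}} := [set I | order_ideal I].

Definition covers (n : nat) (I J : {set pt n}) : bool :=
  [&& I \in S n, J \in S n, I \proper J &
      ~~ [exists K in S n, (I \proper K) && (K \proper J)]].

Definition hasse_adj (n : nat) : rel {set pt n} :=
  fun I J => covers I J || covers J I.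

Definition walk_of_len (n : nat) (I J : {set pt n}) (k : nat) : bool :=
  [exists p : k.-tuple {set pt n}, path (@hasse_adj n) I p && (last I p == J)].

(* Any shortest walk has fewer than #|S n| edges, so searching
   k in [0, #|S n|) finds the true minimum whenever I, J are connected
   (the Hasse diagram of a finite lattice is connected). *)
Definition hdist (n : nat) (I J : {set pt n}) : nat :=
  find (walk_of_len I J) (iota 0 #|S n|).

(* Wiener index of the Hasse diagram of S_n, over ordered pairs. *)
Definition wiener_S (n : nat) : nat :=
  \sum_(I in S n) \sum_(J in S n) hdist I J.

(* Main.v *)
Require Import Defs.
From mathcomp Require Import all_boot.
From mathcomp Require Import zify.
Set Implicit Arguments.
Unset Strict Implicit.
Unset Printing Implicit Defensive.

Fixpoint bits (n : nat) : seq (seq bool) :=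
  if n is n'.+1 then map (cons true) (bits n') ++ map (cons false) (bits n') else [:: [::]].

Lemma sum_bitsS n (F : seq bool -> nat) :
  \sum_(s <- bits n.+1) F s = \sum_(s <- bits n) F (true :: s) + \sum_(s <- bits n) F (false :: s).
Proof. by rewrite /= big_cat !big_map. Qed.

Lemma cons_inj (b : bool) : injective (cons b).
Proof. by move=> x y []. Qed.

Lemma mem_bits n s : (s \in bits n) = (size s == n).
Proof.
elim: n s => [|n IH] s; first by case: s.
case: s => [|b s] /=.
  by rewrite mem_cat; apply/negP => /orP [] /mapP [].
rewrite mem_cat eqSS -IH; case: b.
  rewrite (mem_map (@cons_inj true)); apply/orP/idP => [[] // /mapP [] //|]; by left.
rewrite (mem_map (@cons_inj false)); apply/orP/idP => [[/mapP [] //|//]|]; by right.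
Qed.

Lemma uniq_bits n : uniq (bits n).
Proof.
elim: n => //= n IH; rewrite cat_uniq !map_inj_uniq; try exact: cons_inj.
rewrite IH andbT /=; apply/hasPn => x /mapP [y _ ->]; apply/mapP => [[z _]] //.
Qed.

Lemma size_bits n : size (bits n) = 2 ^ n.
Proof. by elim: n => //= n IH; rewrite size_cat !size_map IH expnS mul2n addnn. Qed.

Lemma sum_bits_count n (f : nat -> nat) :
  \sum_(s <- bits n) f (count id s) = \sum_(k < n.+1) 'C(n, k) * f k.
Proof.
elim: n f => [|n IH] f.
  by rewrite /= big_seq1 big_ord_recl big_ord0 /= mul1n addn0.
rewrite sum_bitsS /=.
rewrite (IH (fun k => f k.+1)) (IH (fun k => f k)).
rewrite [RHS]big_ord_recl bin0 mul1n.
have E1 : \sum_(i < n.+1) 'C(n.+1, bump 0 i) * f (bump 0 i) =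
   \sum_(i < n.+1) 'C(n, i) * f i.+1 + \sum_(i < n.+1) 'C(n, i.+1) * f i.+1.
  by rewrite -big_split; apply: eq_bigr => i _ /=; rewrite /bump /= add1n binS mulnDl addnC.
rewrite E1 addnCA; congr (_ + _).
rewrite big_ord_recl bin0 mul1n; congr (_ + _).
by rewrite [RHS]big_ord_recr /= bin_small // mul0n addn0.
Qed.

Definition ad (a b : nat) := (a - b) + (b - a).
Definition cnt (d : nat) (s : seq bool) := count id (drop d s).

Lemma sum_bitsS' n (F : seq bool -> nat) :
  \sum_(s <- bits n.+1) F s = \sum_(s <- bits n) (F (true :: s) + F (false :: s)).
Proof. by rewrite sum_bitsS big_split. Qed.

Lemma sum2_bitsS n (H : seq bool -> seq bool -> nat) :
  \sum_(s <- bits n.+1) \sum_(t <- bits n.+1) H s t =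
  \sum_(s <- bits n) \sum_(t <- bits n)
     (H (true :: s) (true :: t) + H (true :: s) (false :: t) +
      H (false :: s) (true :: t) + H (false :: s) (false :: t)).
Proof.
rewrite sum_bitsS'; apply: eq_bigr => s _.
rewrite !sum_bitsS' -big_split; apply: eq_bigr => t _ /=; lia.
Qed.

Definition Pn n := \sum_(s <- bits n) \sum_(t <- bits n) (count id s == count id t).
Definition Gn n := \sum_(s <- bits n) \sum_(t <- bits n) ad (count id s) (count id t).
Definition Wn n := \sum_(s <- bits n) \sum_(t <- bits n) \sum_(d < n) ad (cnt d s) (cnt d t).

Lemma Pn_val n : Pn n = 'C(n + n, n).
Proof.
rewrite /Pn.
rewrite (eq_bigr (fun s => \sum_(k < n.+1) 'C(n, k) * (count id s == k))); last first.
  by move=> s _; rewrite -(sum_bits_count n (fun k => (count id s == k) : nat)).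
rewrite (sum_bits_count n (fun c => \sum_(k < n.+1) 'C(n, k) * (c == k))).
rewrite -Vandermonde; apply: eq_bigr => j _.
rewrite (bigD1 j) //= eqxx muln1 big1 ?addn0; last first.
  move=> k kj; rewrite (_ : (j == k :> nat) = false) ?muln0 //.
  by apply/negbTE; rewrite eq_sym.
by rewrite bin_sub // -ltnS.
Qed.

Lemma binom_step n : n.+1 * 'C((n.+1) + (n.+1), n.+1) = 2 * (2 * n).+1 * 'C(n + n, n).
Proof.
have h1 := mul_bin_diag (n + n).+2 n.
have h2 := mul_bin_diag (n + n).+1 n.
have h3 := @bin_sub (n + n).+1 n.
simpl in h1, h2.
have e1 : (n + n).+2 = n.+1 + n.+1 by lia.
have e2 : (n + n).+1 - n = n.+1 by lia.
rewrite e2 in h3; rewrite -e1.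
rewrite h3 ?leqW ?leq_addl // in h2.
nia.
Qed.

Lemma Gn_val n : Gn n = n * 'C(n + n, n).
Proof.
elim: n => [|n IH]; first by rewrite /Gn /= !big_seq1.
have -> : Gn n.+1 = 4 * Gn n + 2 * Pn n.
  rewrite /Gn /Pn sum2_bitsS !big_distrr -big_split; apply: eq_bigr => s _.
  rewrite !big_distrr -big_split; apply: eq_bigr => t _ /=.
  rewrite /ad; case: eqP => e; lia.
rewrite IH Pn_val binom_step; lia.
Qed.

Lemma Wn_val n : 3 * Wn n = n * (2 * n).+1 * 'C(n + n, n).
Proof.
elim: n => [|n IH]; first by rewrite /Wn /= !big_seq1 big_ord0.
have -> : Wn n.+1 = 4 * Wn n + Gn n.+1.
  rewrite /Wn /Gn sum2_bitsS [in RHS]sum2_bitsS !big_distrr -big_split; apply: eq_bigr => s _.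
  rewrite !big_distrr -big_split; apply: eq_bigr => t _ /=.
  have E : forall b b' : bool, \sum_(i < n) ad (cnt (bump 0 i) (b :: s)) (cnt (bump 0 i) (b' :: t))
      = \sum_(i < n) ad (cnt i s) (cnt i t) by move=> b b'; apply: eq_bigr => i _.
  rewrite !big_ord_recl !E /cnt /= !add0n; lia.
rewrite mulnDr mulnA (mulnC 3 4) -mulnA IH Gn_val.
have h := binom_step n.
have -> : n.+1 * (2 * n.+1).+1 * 'C(n.+1 + n.+1, n.+1) = (2 * n.+1).+1 * (n.+1 * 'C(n.+1 + n.+1, n.+1)) by lia.
rewrite h; nia.
Qed.

Lemma cnt_split d k s : cnt d s = count id (take k (drop d s)) + cnt (k + d) s.
Proof. by rewrite /cnt -drop_drop -count_cat cat_take_drop. Qed.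

Lemma cnt_mono d e s : d <= e -> cnt e s <= cnt d s.
Proof.
move=> de; rewrite (cnt_split d (e - d)) subnK //; exact: leq_addl.
Qed.

Lemma cnt_lip d k s : cnt d s <= cnt (d + k) s + k.
Proof.
rewrite (cnt_split d k) addnC (addnC d) leq_add2l.
apply: leq_trans (count_size _ _) _; rewrite size_take; exact: geq_minl.
Qed.

Lemma cnt_bound d s : cnt d s <= size s - d.
Proof. by rewrite /cnt -size_drop count_size. Qed.

Lemma cnt_inj s t : size s = size t -> (forall d, cnt d s = cnt d t) -> s = t.
Proof.
elim: s t => [|b s IH] [|b' t] //= [e] h.
have h0 := h 0; rewrite /cnt /= in h0.
have hs : forall d, cnt d s = cnt d t by move=> d; exact: (h d.+1).
have st := IH t e hs; subst t.
by clear h hs; congr (_ :: _); move: h0; case: b; case: b' => /=; lia.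
Qed.

Definition Phi n (s : seq bool) : {set pt n} :=
  [set p : pt n | (p.1 <= p.2) && (p.1 < cnt (p.2 - p.1) s)].

Lemma Phi_in_S n s : Phi n s \in S n.
Proof.
rewrite inE /order_ideal; apply/andP; split.
  by apply/subsetP => p; rewrite !inE => /andP [].
apply/forallP => [[p1 p2]]; apply/implyP; rewrite inE /= => /andP [h1 h2].
apply/forallP => [[q1 q2]]; apply/implyP; rewrite inE /= => hq.
apply/implyP; rewrite /le_pt /= => /andP [l1 l2]; rewrite inE /= hq /=.
have a := cnt_mono s (_ : q2 - q1 <= p2 - q1).
have b := cnt_lip (p2 - p1) (p1 - q1) s.
have e : p2 - p1 + (p1 - q1) = p2 - q1 by lia.
rewrite e in b.
have := a ltac:(lia); lia.
Qed.

Lemma Phi_inj n s t : size s = n -> size t = n -> Phi n s = Phi n t -> s = t.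
Proof.
move=> hs ht E; apply: cnt_inj; first by rewrite hs ht.
move=> d; have bs := cnt_bound d s; have bt := cnt_bound d t.
rewrite hs in bs; rewrite ht in bt.
case: (ltnP d n) => dn; last by lia.
have key : forall i, i + d < n -> (i < cnt d s) = (i < cnt d t).
  move=> i hid; have hi : i < n by lia.
  have := congr1 (fun A : {set pt n} => ((Ordinal hi, Ordinal hid) : pt n) \in A) E; rewrite !inE /=.
  by rewrite leq_addr /= (_ : i + d - i = d) //; lia.
case: (ltngtP (cnt d s) (cnt d t)) => // h.
  by have := key (cnt d s) ltac:(lia); rewrite ltnn h.
by have := key (cnt d t) ltac:(lia); rewrite ltnn h.
Qed.

Lemma dc_count (P : pred nat) n :
  (forall i j, j <= i -> P i -> P j) -> (forall i, P i -> i < n) ->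
  forall i, P i = (i < \sum_(j < n) P j).
Proof.
elim: n P => [|n IH] P dc bd i.
  by rewrite big_ord0; apply/negbTE/negP => /bd.
rewrite big_ord_recr /=.
case Pn: (P n).
  have allP : forall j, j < n.+1 -> P j by move=> j jn; apply: (dc n) => //; lia.
  rewrite (eq_bigr (fun _ => 1)); last by move=> j _; rewrite allP //; apply: ltnW; exact: ltn_ord.
  rewrite sum1_card card_ord addn1.
  apply/idP/idP => [/bd //|]; exact: allP.
rewrite addn0; apply: IH => // j Pj.
have := bd _ Pj; rewrite ltnS leq_eqVlt => /orP [/eqP ej|//].
by rewrite ej Pn in Pj.
Qed.

Lemma mono_f (f : nat -> nat) a m : (forall d, f d.+1 <= f d) -> f (a + m) <= f a.
Proof.
move=> h; elim: m => [|m IH]; first by rewrite addn0.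
by rewrite addnS; apply: leq_trans (h _) IH.
Qed.

Lemma count_steps (f : nat -> nat) a m :
  (forall d, f d.+1 <= f d) -> (forall d, f d <= (f d.+1).+1) ->
  count id (map (fun d => f d.+1 < f d) (iota a m)) = f a - f (a + m).
Proof.
move=> h1 h2; elim: m a => [|m IH] a; first by rewrite addn0 subnn.
rewrite /= IH.
have := mono_f a.+1 m h1; have := h1 a; have := h2 a.
rewrite addSnnS; lia.
Qed.

Section Surj.
Variable n : nat.
Variable I : {set pt n}.
Hypothesis HI : I \in S n.

Definition mem2 (i j : nat) := [exists p in I, (p.1 == i :> nat) && (p.2 == j :> nat)].

Lemma m_le i j : mem2 i j -> (i <= j) && (j < n).
Proof.
case/existsP => [[p1 p2]] /and3P [pI /eqP e1 /eqP e2].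
move: HI; rewrite inE /order_ideal => /andP [/subsetP sub _].
have := sub _ pI; rewrite inE /= -e1 -e2 => ->; by rewrite ltn_ord.
Qed.

Lemma m_down i j i' j' : mem2 i j -> i' <= i -> j' <= j -> i' <= j' -> mem2 i' j'.
Proof.
move=> m; have /andP [ij jn] := m_le m.
case/existsP: m => [[p1 p2]] /and3P [pI /eqP e1 /eqP e2] l1 l2 l3.
have hi : i' < n by lia.
have hj : j' < n by lia.
apply/existsP; exists ((Ordinal hi, Ordinal hj) : pt n); rewrite /= !eqxx !andbT.
move: HI; rewrite inE /order_ideal => /andP [_ /forallP /(_ (p1, p2)) /implyP /(_ pI)].
move=> /forallP /(_ (Ordinal hi, Ordinal hj)) /implyP H.
have st : ((Ordinal hi, Ordinal hj) : pt n) \in stair n by rewrite inE.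
move: (H st) => /implyP; apply.
rewrite /le_pt /=; move: e1 e2 => /= -> ->; by rewrite l1 l2.
Qed.

Lemma m_pt (p : pt n) : mem2 p.1 p.2 = (p \in I).
Proof.
apply/idP/idP => [|pI]; last by apply/existsP; exists p; rewrite pI !eqxx.
case/existsP => q /and3P [qI e1 e2].
have -> : p = q; last by [].
case: p q qI e1 e2 => [p1 p2] [q1 q2] /= _ e1 e2.
by congr (_, _); apply: ord_inj; apply/eqP; rewrite eq_sym.
Qed.

Definition Dd d := \sum_(i < n) mem2 i (i + d).

Lemma Dd_spec d i : mem2 i (i + d) = (i < Dd d).
Proof.
apply: (dc_count (P := fun i => mem2 i (i + d))).
  by move=> a b ba m; apply: (m_down m) => //; lia.
by move=> a /m_le; lia.
Qed.

Lemma Dd_S d : Dd d.+1 <= Dd d.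
Proof.
case e: (Dd d.+1) => [//|k].
have : k < Dd d.+1 by lia.
rewrite -Dd_spec -(Dd_spec d) => m; apply: (m_down m) => //; lia.
Qed.

Lemma Dd_S' d : Dd d <= (Dd d.+1).+1.
Proof.
case e: (Dd d) => [//|k].
case: k e => [//|k] e.
have : k.+1 < Dd d by lia.
rewrite -Dd_spec => m.
have : mem2 k (k + d.+1) by apply: (m_down m); lia.
rewrite Dd_spec; lia.
Qed.

Lemma Dd_big d : n <= d -> Dd d = 0.
Proof.
move=> nd; case e: (Dd d) => [//|k].
have : 0 < Dd d by lia.
by rewrite -Dd_spec => /m_le; lia.
Qed.

Lemma Phi_surj : exists s, size s = n /\ Phi n s = I.
Proof.
exists (mkseq (fun d => Dd d.+1 < Dd d) n); split; first by rewrite size_mkseq.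
have hc : forall d, cnt d (mkseq (fun d => Dd d.+1 < Dd d) n) = Dd d.
  move=> d; case: (leqP n d) => nd.
    by rewrite Dd_big // /cnt drop_oversize // size_mkseq.
  rewrite /cnt /mkseq -map_drop drop_iota add0n count_steps; last first.
    - exact: Dd_S'.
    - exact: Dd_S.
  by rewrite subnKC ?(ltnW nd) // (Dd_big (leqnn n)) subn0.
apply/setP => p; rewrite inE hc -m_pt.
case: (leqP p.1 p.2) => h.
  by rewrite andTb -Dd_spec subnKC.
rewrite andFb; apply/esym/negbTE/negP => /m_le /andP [a _]; move: a; by rewrite leqNgt h.
Qed.

End Surj.

Lemma xor_sum m a b : a <= m -> b <= m ->
  \sum_(0 <= i < m) ((i < a) != (i < b) : nat) = ad a b.
Proof.
elim: m a b => [|m IH] a b ha hb.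
  by rewrite big_geq // /ad; lia.
rewrite big_nat_recr //=.
rewrite (@eq_big_nat _ _ _ 0 m _ (fun i => ((i < minn a m) != (i < minn b m) : nat))); last first.
  move=> i /andP [_ im]; congr (nat_of_bool (_ != _)); apply/idP/idP; lia.
rewrite IH ?geq_minr //.
rewrite /ad; case: (ltnP m a); case: (ltnP m b) => /=; lia.
Qed.

Lemma tri_sum n (f : nat -> nat -> nat) :
  \sum_(0 <= i < n) \sum_(0 <= j < n) (i <= j) * f i (j - i) =
  \sum_(0 <= d < n) \sum_(0 <= i < n - d) f i d.
Proof.
elim: n => [|n IH]; first by rewrite !big_geq.
have L : \sum_(0 <= i < n.+1) \sum_(0 <= j < n.+1) (i <= j) * f i (j - i) =
    \sum_(0 <= i < n) \sum_(0 <= j < n) (i <= j) * f i (j - i) + \sum_(0 <= i < n.+1) f i (n - i).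
  have An : \sum_(0 <= j < n.+1) (n <= j) * f n (j - n) = f n 0.
    rewrite big_nat_recr //= big1_seq ?leqnn ?subnn ?mul1n ?add0n //.
    by move=> j; rewrite mem_index_iota => /andP [_ /andP [_ jn]]; rewrite leqNgt jn.
  rewrite big_nat_recr //= An [in RHS]big_nat_recr //= subnn addnA; congr (_ + _).
  rewrite -big_split /=; apply: eq_big_nat => i /andP [_ iN].
  by rewrite big_nat_recr //= (ltnW iN) mul1n.
have R : \sum_(0 <= d < n.+1) \sum_(0 <= i < n.+1 - d) f i d =
    \sum_(0 <= d < n) \sum_(0 <= i < n - d) f i d + \sum_(0 <= d < n.+1) f (n - d) d.
  rewrite big_nat_recr //= subSnn big_nat1 (big_nat_recr n) //= subnn addnA; congr (_ + _).
  rewrite -big_split /=; apply: eq_big_nat => d /andP [_ dn].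
  by rewrite (subSn (ltnW dn)) big_nat_recr // (ltnW dn).
rewrite L R IH; congr (_ + _).
rewrite big_nat_rev /=; apply: eq_big_nat => i /andP [_ iN].
by rewrite add0n subSS subKn.
Qed.

Definition symd n (I J : {set pt n}) : {set pt n} := [set p | (p \in I) != (p \in J)].

Lemma card_symd_Phi n s t : size s = n -> size t = n ->
  #|symd (Phi n s) (Phi n t)| = \sum_(d < n) ad (cnt d s) (cnt d t).
Proof.
move=> hs ht.
pose f i d := ((i < cnt d s) != (i < cnt d t) : nat).
transitivity (\sum_(0 <= i < n) \sum_(0 <= j < n) (i <= j) * f i (j - i)).
  rewrite -sum1_card big_mkcond /=.
  rewrite (eq_bigr (fun p : pt n => (fun (i j : 'I_n) => if ((i, j) : pt n) \in symd (Phi n s) (Phi n t) then 1 else 0) p.1 p.2)); last by move=> [i j].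
  rewrite -(pair_bigA _ (fun (i j : 'I_n) => if ((i, j) : pt n) \in symd (Phi n s) (Phi n t) then 1 else 0)) /=.
  rewrite big_mkord; apply: eq_bigr => i _; rewrite big_mkord; apply: eq_bigr => j _.
  rewrite !inE /= /f; case: (leqP i j) => _ //=.
  by case: (_ != _).
rewrite tri_sum big_mkord; apply: eq_bigr => d _.
apply: xor_sum; [have := cnt_bound d s | have := cnt_bound d t]; rewrite ?hs ?ht //.
Qed.

Lemma last_rev_belast (T : Type) (x : T) p : last (last x p) (rev (belast x p)) = x.
Proof. by case: p => [|z p] //=; rewrite rev_cons last_rcons. Qed.

Section Dist.
Variable n : nat.
Implicit Types I J K A B : {set pt n}.

Lemma S_sub I p : I \in S n -> p \in I -> p \in stair n.
Proof. by rewrite inE => /andP [/subsetP h _] /h. Qed.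

Lemma S_down I p q : I \in S n -> p \in I -> q \in stair n -> le_pt q p -> q \in I.
Proof.
rewrite inE => /andP [_ /forallP h] pI qs lqp.
by move: (h p) => /implyP /(_ pI) /forallP /(_ q) /implyP /(_ qs) /implyP /(_ lqp).
Qed.

Lemma S_intro I : (forall p, p \in I -> p \in stair n) ->
  (forall p q, p \in I -> q \in stair n -> le_pt q p -> q \in I) -> I \in S n.
Proof.
move=> h1 h2; rewrite inE; apply/andP; split; first by apply/subsetP.
apply/forallP => p; apply/implyP => pI; apply/forallP => q; apply/implyP => qs.
by apply/implyP; exact: h2.
Qed.

Lemma le_pt_eq (p q : pt n) : le_pt q p -> p.1 + p.2 <= q.1 + q.2 -> q = p.
Proof.
case: p q => [p1 p2] [q1 q2]; rewrite /le_pt /= => /andP [l1 l2] l3.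
by congr (_, _); apply: ord_inj; lia.
Qed.

Lemma SI I J : I \in S n -> J \in S n -> I :&: J \in S n.
Proof.
move=> hI hJ; apply: S_intro => [p|p q].
  by rewrite inE => /andP [/(S_sub hI)].
move=> /setIP [pI pJ] qs l; rewrite inE.
by rewrite (S_down hI pI qs l) (S_down hJ pJ qs l).
Qed.

Lemma min_ext A B : A \in S n -> B \in S n -> A \proper B ->
  exists2 p, (p \in B) && (p \notin A) & p |: A \in S n.
Proof.
move=> hA hB /properP [sAB [p0 p0B p0A]].
have P0 : (p0 \in B) && (p0 \notin A) by rewrite p0B p0A.
case: (@arg_minnP _ p0 (fun p : pt n => (p \in B) && (p \notin A)) (fun p : pt n => p.1 + p.2) P0) => p /andP [pB pA] pmin.
exists p; first by rewrite pB pA.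
apply: S_intro => [x|x q].
  rewrite !inE => /orP [/eqP -> | /(S_sub hA)]; last by rewrite inE.
  by have := S_sub hB pB; rewrite inE.
move=> /setU1P [-> | xA] qs l; last by apply/setU1P; right; exact: S_down hA xA qs l.
case qA: (q \in A); first by apply/setU1P; right.
have qB := S_down hB pB qs l.
have := pmin q; rewrite qB qA => /(_ isT) m.
by apply/setU1P; left; exact: le_pt_eq l m.
Qed.

Lemma cover_add A p : A \in S n -> p \notin A -> p |: A \in S n -> covers A (p |: A).
Proof.
move=> hA pA hA'; rewrite /covers hA hA' /=.
have pr : A \proper p |: A.
  by apply/properP; split; [exact: subsetUr | exists p; rewrite ?setU11].
rewrite pr /=; apply/existsP => [[K /andP [_ /andP [h1 h2]]]].
have := proper_card h1; have := proper_card h2; rewrite cardsU1 pA; lia.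
Qed.

Lemma upwalk k : forall A B, A \in S n -> B \in S n -> A \subset B -> #|B :\: A| = k ->
  exists P : seq {set pt n}, [/\ size P = k, path (@hasse_adj n) A P & last A P = B].
Proof.
elim: k => [|k IH] A B hA hB sAB ck.
  exists [::]; split => //=; apply/eqP; rewrite eqEsubset sAB /= -setD_eq0.
  by apply/eqP; apply: cards0_eq.
have nAB : A != B by apply/eqP => E; move: ck; rewrite E setDv cards0.
have pr : A \proper B by rewrite properEneq nAB.
case: (min_ext hA hB pr) => p /andP [pB pA] hA'.
have sA'B : p |: A \subset B by apply/subsetP => x /setU1P [-> //| xA]; exact: (subsetP sAB).
have ck' : #|B :\: (p |: A)| = k.
  have E : B :\: (p |: A) = (B :\: A) :\ p by apply/setP => x; rewrite !inE; case: (x == p); rewrite ?andbF ?andbT.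
  move: ck; rewrite (cardsD1 p) E !inE pB pA /=; lia.
case: (IH _ _ hA' hB sA'B ck') => P [sP pP lP].
exists (p |: A :: P); split => //=; first by rewrite sP.
by rewrite pP andbT /hasse_adj cover_add.
Qed.

Lemma hasse_sym : symmetric (@hasse_adj n).
Proof. by move=> x y; rewrite /hasse_adj orbC. Qed.

Lemma walk_exists I J : I \in S n -> J \in S n ->
  exists P : seq {set pt n}, [/\ size P = #|I :\: J| + #|J :\: I|, path (@hasse_adj n) I P & last I P = J].
Proof.
move=> hI hJ; have hM := SI hI hJ.
have e1 : I :\: (I :&: J) = I :\: J by apply/setP => x; rewrite !inE; case: (x \in I); case: (x \in J).
have e2 : J :\: (I :&: J) = J :\: I by apply/setP => x; rewrite !inE; case: (x \in I); case: (x \in J).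
case: (upwalk hM hI (subsetIl I J) (erefl _)) => P1 [s1 p1 l1].
case: (upwalk hM hJ (subsetIr I J) (erefl _)) => P2 [s2 p2 l2].
exists (rev (belast (I :&: J) P1) ++ P2); split.
- by rewrite size_cat size_rev size_belast s1 s2 e1 e2.
- rewrite cat_path -{1}l1 rev_path.
  rewrite (eq_path (e' := @hasse_adj n)); last by move=> x y; rewrite hasse_sym.
  rewrite p1 /=.
  by rewrite -{1}l1 last_rev_belast p2.
- by rewrite last_cat -{1}l1 last_rev_belast l2.
Qed.

Lemma card_symd I J : #|symd I J| = #|I :\: J| + #|J :\: I|.
Proof.
have -> : symd I J = (I :\: J) :|: (J :\: I).
  by apply/setP => x; rewrite !inE; case: (x \in I); case: (x \in J).
rewrite cardsU (_ : (I :\: J) :&: (J :\: I) = set0) ?cards0 ?subn0 //.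
by apply/setP => x; rewrite !inE; case: (x \in I); case: (x \in J).
Qed.

Lemma symdC I J : symd I J = symd J I.
Proof. by apply/setP => x; rewrite !inE eq_sym. Qed.

Lemma cover_symd I J : covers I J -> #|symd I J| = 1.
Proof.
case/and4P => hI hJ pr nK.
case: (min_ext hI hJ pr) => p /andP [pJ pI] hK.
have sKJ : p |: I \subset J.
  apply/subsetP => x /setU1P [-> //| xI]; exact: (subsetP (proper_sub pr)).
case: (eqVneq (p |: I) J) => [E|ne].
  rewrite card_symd -E.
  have -> : I :\: (p |: I) = set0 by apply/setP => x; rewrite !inE; case: (x \in I); rewrite ?orbT ?andbF.
  have -> : (p |: I) :\: I = [set p].
    apply/setP => x; rewrite !inE; case: eqP => [->|] //=; first by rewrite pI.
    by rewrite andNb.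
  by rewrite cards0 cards1.
exfalso; move/negP: nK; apply; apply/existsP; exists (p |: I); rewrite hK /=.
apply/andP; split; last by rewrite properEneq ne sKJ.
by apply/properP; split; [exact: subsetUr | exists p; rewrite ?setU11].
Qed.

Lemma symd_tri I J K : #|symd I K| <= #|symd I J| + #|symd J K|.
Proof.
have sub : symd I K \subset symd I J :|: symd J K.
  apply/subsetP => x; rewrite !inE; case: (x \in I); case: (x \in J); case: (x \in K) => //.
apply: leq_trans (subset_leq_card sub) _.
by rewrite -cardsUI leq_addr.
Qed.

Lemma walk_lb I P : path (@hasse_adj n) I P -> #|symd I (last I P)| <= size P.
Proof.
elim: P I => [|J P IH] I /=.
  by move=> _; rewrite (_ : symd I I = set0) ?cards0 //; apply/setP => x; rewrite !inE eqxx.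
case/andP => a p.
apply: leq_trans (symd_tri I J _) _.
have -> : #|symd I J| = 1.
  by case/orP: a => [/cover_symd //| /cover_symd]; rewrite symdC.
by rewrite add1n ltnS IH.
Qed.

End Dist.

Lemma find_first (P : pred nat) a N m : a <= m < a + N -> P m ->
  (forall k, a <= k < m -> ~~ P k) -> find P (iota a N) = m - a.
Proof.
elim: N a => [|N IH] a hm Pm hk; first by lia.
rewrite /=; case: (eqVneq a m) => [->|ne]; first by rewrite Pm subnn.
have : ~~ P a by apply: hk; lia.
move/negbTE => ->; rewrite IH //; [lia | lia | by move=> k hk'; apply: hk; lia].
Qed.

Lemma hdist_eq n (I J : {set pt n}) : I \in S n -> J \in S n -> #|symd I J| < #|S n| ->
  hdist I J = #|symd I J|.
Proof.
move=> hI hJ lt; rewrite /hdist (@find_first _ 0 _ #|symd I J|) ?subn0 //.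
- case: (walk_exists hI hJ) => P [sP pP lP].
  rewrite -card_symd in sP.
  apply/existsP; exists (@Tuple _ _ P (introT eqP sP)); by rewrite /= pP lP eqxx.
- move=> k /andP [_ km]; apply/existsP => [[t /andP [pt /eqP lt']]].
  by have := walk_lb pt; rewrite lt' size_tuple; lia.
Qed.


Lemma perm_S n : perm_eq (enum (S n)) (map (Phi n) (bits n)).
Proof.
apply: uniq_perm; first exact: enum_uniq.
  rewrite map_inj_in_uniq ?uniq_bits // => s t; rewrite !mem_bits => /eqP hs /eqP ht.
  exact: Phi_inj.
move=> I; rewrite mem_enum; apply/idP/mapP => [hI|[s _ ->]]; last exact: Phi_in_S.
case: (Phi_surj hI) => s [hs <-]; exists s => //; by rewrite mem_bits hs.
Qed.

Lemma sum_S n (F : {set pt n} -> nat) : \sum_(I in S n) F I = \sum_(s <- bits n) F (Phi n s).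
Proof. by rewrite -big_enum (perm_big _ (perm_S n)) big_map. Qed.

Lemma card_S n : #|S n| = 2 ^ n.
Proof. by rewrite cardE (perm_size (perm_S n)) size_map size_bits. Qed.

Lemma tri_lt n : \sum_(d < n) (n - d) < 2 ^ n.
Proof.
elim: n => [|n IH]; first by rewrite big_ord0.
rewrite big_ord_recl /= subn0.
rewrite (eq_bigr (fun d : 'I_n => n - d)); last by move=> d _; rewrite /bump /= add1n subSS.
have := ltn_expl n (isT : 1 < 2); rewrite expnS; move: IH.
set X := \sum_(i < n) _; lia.
Qed.

Lemma wiener_Wn n : wiener_S n = Wn n.
Proof.
rewrite /wiener_S sum_S /Wn; apply: eq_big_seq => s hs; rewrite sum_S; apply: eq_big_seq => t ht.
move: hs ht; rewrite !mem_bits => /eqP hs /eqP ht.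
rewrite -card_symd_Phi //; apply: hdist_eq; try exact: Phi_in_S.
rewrite card_S card_symd_Phi //; apply: leq_ltn_trans (tri_lt n).
apply: leq_sum => d _.
have := cnt_bound d s; have := cnt_bound d t; rewrite hs ht /ad; lia.
Qed.

Lemma wiener_val n : 3 * wiener_S n = n * (2 * n).+1 * 'C(n + n, n).
Proof. by rewrite wiener_Wn Wn_val. Qed.

Lemma w0 : wiener_S 0 = 0.
Proof. by have := wiener_val 0; lia. Qed.

Lemma w1 : wiener_S 1 = 2.
Proof. by have := wiener_val 1; rewrite /= (_ : 'C(2, 1) = 2) //; lia. Qed.

Lemma w_rec n : n.+1 * wiener_S n.+2 = (4 * n + 10) * wiener_S n.+1.
Proof.
have h1 := wiener_val n.+2; have h2 := wiener_val n.+1.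
have b := binom_step n.+1.
apply/eqP; rewrite -(eqn_pmul2l (isT : 0 < 3)); apply/eqP.
rewrite mulnCA h1 [RHS]mulnCA h2.
have -> : n.+1 * (n.+2 * (2 * n.+2).+1 * 'C(n.+2 + n.+2, n.+2)) =
   n.+1 * (2 * n.+2).+1 * (n.+2 * 'C(n.+2 + n.+2, n.+2)) by lia.
rewrite b; nia.
Qed.

Unset Implicit Arguments.
From Stdlib Require Import Reals Lra Lia.
From Coquelicot Require Import Coquelicot.
Open Scope R_scope.

Definition v (k : nat) : R := INR (wiener_S k.+1).

Lemma v0 : v 0 = 2.
Proof. unfold v; rewrite w1; simpl; lra. Qed.

Lemma v_rec k : INR k.+1 * v k.+1 = (4 * INR k + 10) * v k.
Proof.
unfold v. have H := w_rec k. apply (f_equal INR) in H.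
rewrite -!multE -!plusE in H. rewrite !mult_INR plus_INR mult_INR in H.
simpl INR in H. rewrite H. ring.
Qed.

Lemma v_pos k : 0 < v k.
Proof.
elim: k => [|k IH]; first by rewrite v0; lra.
have H := v_rec k. have Hk := pos_INR k. have Hs : 0 < INR k.+1 by apply lt_0_INR; lia.
nra.
Qed.

Lemma radius : CV_radius v = Finite (/ 4).
Proof.
apply CV_radius_finite_DAlembert.
- move=> n; have := v_pos n; lra.
- lra.
- apply is_lim_seq_ext with (u := fun n => 4 + 6 * / INR n.+1).
    move=> n. have Hs : 0 < INR n.+1 by apply lt_0_INR; lia.
    have H := v_rec n. have P := v_pos n. have P' := v_pos n.+1.
    rewrite Rabs_pos_eq.
      apply (Rmult_eq_reg_l (INR n.+1 * v n)); last by nra.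
      field_simplify; try lra. rewrite S_INR in H |- *. nra.
    apply Rlt_le, Rdiv_lt_0_compat; lra.
  have L : is_lim_seq (fun n => / INR n.+1) 0.
    have L1 : is_lim_seq (fun n => INR n.+1) p_infty by apply (is_lim_seq_incr_1 INR p_infty), is_lim_seq_INR.
    have := is_lim_seq_inv _ _ L1 ltac:(discriminate). by [].
  have L2 := is_lim_seq_scal_l _ 6 _ L. simpl in L2.
  have L3 := is_lim_seq_plus' _ _ 4 (6 * 0) (is_lim_seq_const 4) L2.
  by rewrite Rmult_0_r Rplus_0_r in L3.
Qed.

Lemma inside c : Rabs c < / 4 -> Rbar_lt (Rabs c) (CV_radius v).
Proof. by rewrite radius. Qed.

Lemma deriv_eq c : Rabs c < / 4 -> PSeries (PS_derive v) c * (1 - 4 * c) = 10 * PSeries v c.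
Proof.
move=> hc; have hi := inside c hc.
have Hd : forall n, PS_derive v n = PS_plus (PS_scal 4 (fun n => INR n * v n)) (PS_scal 10 v) n.
  move=> n; rewrite /PS_derive v_rec.
  have e : (4 * INR n + 10) * v n = 4 * (INR n * v n) + 10 * v n by ring.
  exact: e.
have E1 : PSeries (fun n => INR n * v n) c = c * PSeries (PS_derive v) c.
  rewrite -PSeries_incr_1; apply PSeries_ext => n; case: n => [|m] /=.
    by rewrite /zero /=; ring.
  by rewrite /PS_derive.
have ex0 := CV_radius_inside v c hi.
have ex1 : ex_pseries (fun n => INR n * v n) c.
  apply: (ex_pseries_ext (PS_incr_1 (PS_derive v))); last first.
    apply ex_pseries_incr_1, ex_pseries_derive, hi.
  by case=> [|m] /=; [rewrite /zero /=; ring | rewrite /PS_derive].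
have HD : PSeries (PS_derive v) c = 4 * (c * PSeries (PS_derive v) c) + 10 * PSeries v c.
  rewrite {1}(PSeries_ext _ _ _ Hd) PSeries_plus ?PSeries_scal ?E1 //.
  - apply ex_pseries_scal => //; rewrite /mult /=; ring.
  - apply ex_pseries_scal => //; rewrite /mult /=; ring.
have -> : PSeries (PS_derive v) c * (1 - 4 * c) = PSeries (PS_derive v) c - 4 * (c * PSeries (PS_derive v) c) by ring.
rewrite {1}HD; ring.
Qed.

Lemma Vclosed x : Rabs x < / 4 -> PSeries v x * sqrt (1 - 4 * x) ^ 5 = 2.
Proof.
move=> hx.
pose h := fun c => PSeries v c * sqrt (1 - 4 * c) ^ 5.
have Hder : forall c, Rabs (c - 0) <= Rabs x -> is_derive h c 0.
  move=> c hc. rewrite Rminus_0_r in hc.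
  have hc' : Rabs c < / 4 by lra.
  have hpos : 0 < 1 - 4 * c.
    have := Rle_abs c; lra.
  have d1 := is_derive_PSeries v c (inside c hc').
  have d0 : is_derive (fun c => 1 - 4 * c) c (-4) by auto_derive => //; ring.
  have d3 := is_derive_sqrt _ _ _ d0 hpos.
  have d2 := is_derive_pow _ 5 _ _ d3.
  have d := Derive.is_derive_mult _ _ _ _ _ d1 d2.
  suff E : PSeries (PS_derive v) c * sqrt (1 - 4 * c) ^ 5 +
      PSeries v c * (INR 5 * (-4 / (2 * sqrt (1 - 4 * c))) * sqrt (1 - 4 * c) ^ Init.Nat.pred 5) = 0.
    by rewrite E in d.
  have De := deriv_eq c hc'.
  have s2 := sqrt_sqrt (1 - 4 * c) (Rlt_le _ _ hpos).
  have sp := sqrt_lt_R0 _ hpos.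
  move: De s2 sp; generalize (sqrt (1 - 4 * c)) => s De s2 sp.
  have -> : INR 5 * (-4 / (2 * s)) * s ^ Init.Nat.pred 5 = -10 * s ^ 3.
    simpl; field; lra.
  have -> : PSeries (PS_derive v) c * s ^ 5 + PSeries v c * (-10 * s ^ 3) =
     s ^ 3 * (PSeries (PS_derive v) c * (s * s) - 10 * PSeries v c) by ring.
  rewrite s2 De; ring.
have [c [Hc _]] := MVT_cor4 h (fun _ => 0) 0 (Rabs x) Hder x ltac:(rewrite Rminus_0_r; lra).
have h0 : h 0 = 2.
  rewrite /h PSeries_0 v0 Rmult_0_r Rminus_0_r sqrt_1; ring.
rewrite /h in Hc h0 |- *; lra.
Qed.

Theorem theorem1p5 (x : R) :
  Rabs x < / 4 ->
  infinite_sum (fun n : nat => INR (wiener_S n) * x ^ n)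
    (8 * x * (1 + sqrt (1 - 4 * x) - x * (3 + sqrt (1 - 4 * x)))
     / ((1 - 4 * x) * (1 - 4 * x + sqrt (1 - 4 * x)) ^ 3)).
Proof.
move=> hx.
apply (proj1 (is_series_Reals _ _)).
have P := PSeries_correct v x (CV_radius_inside v x (inside x hx)).
have P1 := is_pseries_incr_1 _ _ _ P.
apply is_pseries_R in P1.
have Vc := Vclosed x hx.
have hpos : 0 < 1 - 4 * x by have := Rle_abs x; lra.
have s2 := sqrt_sqrt (1 - 4 * x) (Rlt_le _ _ hpos).
have sp := sqrt_lt_R0 _ hpos.
have E : scal x (PSeries v x) = 8 * x * (1 + sqrt (1 - 4 * x) - x * (3 + sqrt (1 - 4 * x)))
     / ((1 - 4 * x) * (1 - 4 * x + sqrt (1 - 4 * x)) ^ 3).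
  rewrite /scal /= /mult /=.
  move: Vc s2 sp; generalize (PSeries v x) (sqrt (1 - 4 * x)) => V s Vc s2 sp.
  have ex : x = (1 - s * s) / 4 by lra.
  rewrite -s2.
  have VE : V = 2 / s ^ 5 by field_simplify_eq; [lra | lra].
  rewrite VE ex; field; split; nra.
rewrite -E.
apply: (is_series_ext _ _ _ _ P1) => n.
case: n => [|m] /=; first by rewrite w0 /zero /=; ring.
by rewrite /v.
Qed.
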